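(* Let $G$ be an equilateral compact tree with $p\ge2$ vertices, edge length $\ell$, identically zero potentials, and let $b_1,\dots,b_p\in\mathbb{R}$. Then for each $r=1,2,\dots,p$, the entire function $z\mapsto z^{r-1}\phi(z^2,b_1,\dots,b_p)$ is not of sine type.
   Context: Setting: $G$ is a tree with vertices $v_1,\dots,v_p$ and edges $e_1,\dots,e_{p-1}$ of length $\ell>0$, each oriented arbitrarily and identified with $[0,\ell]$; on each edge $-y_j''=\lambda y_j$. For a vertex $v$ and incident edge $e_j$, $y_j(v)$ is $y_j(\ell)$ if $e_j$ is incoming, $y_j(0)$ if outgoing. Robin–Kirchhoff condition at $v_i$: continuity of $y_j(v_i)$ over incident edges and $\sum_{\text{in}}y_j'(\ell)-\sum_{\text{out}}y_k'(0)+b_iy(v_i)=0$. Characteristic function: with $s(\lambda,x)=\sin(\sqrt\lambda x)/\sqrt\lambda$, $c(\lambda,x)=\cos(\sqrt\lambda x)$ and $y_j=\alpha_js+\beta_jc$ on $e_j$, the vertex conditions form a $2g\times2g$ linear system; fixing for each $v_i$ an incident edge $e_{j(i)}$ and a fixed ordering in which $v_i$ contributes $d(v_i)-1$ continuity rows plus one principal row $\sum_{\text{in}}y_j'(\ell)-\sum_{\text{out}}y_k'(0)+b_iy_{j(i)}(v_i)=0$, $\phi(\lambda,b_1,\dots,b_p)$ is the determinant of its matrix. It is an entire even function of $z=\sqrt\lambda$. Sine type: an entire function $\omega$ of exponential type $\sigma>0$ is of sine type if its zeros lie in a strip $|\operatorname{Im}z|<h$, for some $h_1$ and $M_1,M_2>0$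 one has $M_1\le|\omega(x+ih_1)|\le M_2$ for all real $x$, and its exponential types in the upper and lower half-planes are equal. *)

(* Defs.v *)
From HB Require Import structures.
From mathcomp Require Import all_boot all_order all_algebra.
From mathcomp Require Import complex.
From mathcomp Require Import reals.
From mathcomp.analysis Require Import sequences exp trigo.

Set Implicit Arguments.
Unset Strict Implicit.
Unset Printing Implicit Defensive.

Import Order.TTheory GRing.Theory Num.Theory.
Local Open Scope ring_scope.
Import Normc.

Section Defs.
Variable R : realType.
Local Notation C := R[i].

Definition re_part (z : C) : R := let: Complex a _ := z in a.
Definition im_part (z : C) : R := let: Complex _ b := z in b.
Definition cexp (z : C) : C :=
  Complex (expR (re_part z) * cos (im_part z)) (expR (re_part z) * sin (im_part z)).
Definition ci : C := Complex 0 1.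
Definition csin (z : C) : C := (cexp (ci * z) - cexp (- (ci * z))) / (2%:R * ci).
Definition ccos (z : C) : C := (cexp (ci * z) + cexp (- (ci * z))) / 2%:R.

(* s(lambda,x) = sin(sqrt lambda x)/sqrt lambda  (= x when lambda = 0),
   c(lambda,x) = cos(sqrt lambda x); independent of the branch of the root. *)
Definition s_fun (lam : C) (x : R) : C :=
  if lam == 0 then x%:C%C else csin (sqrtC lam * x%:C%C) / sqrtC lam.
Definition c_fun (lam : C) (x : R) : C := ccos (sqrtC lam * x%:C%C).
Definition s'_fun (lam : C) (x : R) : C := ccos (sqrtC lam * x%:C%C).
Definition c'_fun (lam : C) (x : R) : C :=
  - (sqrtC lam * csin (sqrtC lam * x%:C%C)).

Definition entire (f : C -> C) : Prop :=
  forall z0 : C, exists d : C, forall eps : R, 0 < eps ->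
    exists2 delta : R, 0 < delta &
      forall z : C, z != z0 -> normc (z - z0) < delta ->
        normc ((f z - f z0) / (z - z0) - d) < eps.

(* f has exponential type exactly sigma on the set S, i.e.
   limsup_{|z|->oo, z in S} log|f z| / |z| = sigma (written without logs). *)
Definition exp_type_on (S : C -> Prop) (f : C -> C) (sigma : R) : Prop :=
  (forall eps : R, 0 < eps -> exists M : R, forall z, S z ->
       normc (f z) <= M * expR ((sigma + eps) * normc z)) /\
  (forall eps : R, 0 < eps -> ~ (exists M : R, forall z, S z ->
       normc (f z) <= M * expR ((sigma - eps) * normc z))).

Definition sine_type (f : C -> C) : Prop :=
  entire f /\
  (exists sigma : R, 0 < sigma /\ exp_type_on (fun _ => True) f sigma) /\
  (exists h : R, forall z : C, f z = 0 -> `|im_part z| < h) /\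
  (exists h1 M1 M2 : R, 0 < M1 /\ 0 < M2 /\
     forall x : R, M1 <= normc (f (Complex x h1)) <= M2) /\
  (exists tau : R, exp_type_on (fun z => 0 <= im_part z) f tau /\
                   exp_type_on (fun z => im_part z <= 0) f tau).

(* Vertices 'I_p, edges 'I_p.-1; edge k goes from src k (identified with 0)
   to dst k (identified with ell). *)
Definition adj (p : nat) (src dst : 'I_p.-1 -> 'I_p) : rel 'I_p :=
  fun u v => [exists k, ((src k == u) && (dst k == v)) ||
                        ((src k == v) && (dst k == u))].

Definition is_tree (p : nat) (src dst : 'I_p.-1 -> 'I_p) : Prop :=
  (forall k, src k != dst k) /\ (forall u v, connect (adj src dst) u v).

Section Matrix.
Variables (p : nat) (ell : R) (src dst : 'I_p.-1 -> 'I_p)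
          (jsel : 'I_p -> 'I_p.-1) (b : 'I_p -> R).
Local Notation g := p.-1.

(* Columns: lshift k = alpha_k, rshift k = beta_k, y_k = alpha_k s + beta_k c. *)
(* Coefficient of column c in the linear form y_k(v_i). *)
Definition coef_val (lam : C) (i : 'I_p) (k : 'I_g) (c : 'I_(g + g)) : C :=
  match split c with
  | inl k' => if k' == k then
                (if src k == i then 0 else if dst k == i then s_fun lam ell else 0)
              else 0
  | inr k' => if k' == k then
                (if src k == i then 1 else if dst k == i then c_fun lam ell else 0)
              else 0
  end.

(* Coefficient of column c in the principal row of v_i:
   sum_{in} y_k'(ell) - sum_{out} y_k'(0) + b_i y_{j(i)}(v_i). *)
Definition coef_princ (lam : C) (i : 'I_p) (c : 'I_(g + g)) : C :=
  (match split c with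
   | inl k' => (if dst k' == i then s'_fun lam ell else 0)
               - (if src k' == i then s'_fun lam 0 else 0)
   | inr k' => (if dst k' == i then c'_fun lam ell else 0)
               - (if src k' == i then c'_fun lam 0 else 0)
   end) + (b i)%:C%C * coef_val lam i (jsel i) c.

(* Rows are indexed by incidences: lshift k = edge k at src k,
   rshift k = edge k at dst k.  The incidence (j(i), v_i) carries the principal
   row of v_i; every other incidence (k, v_i) carries the continuity row
   y_{j(i)}(v_i) - y_k(v_i) = 0. *)
Definition charmat (lam : C) : 'M[C]_(g + g) :=
  \matrix_(r, c)
    let: (k, i) := match split r with
                   | inl k => (k, src k)
                   | inr k => (k, dst k)
                   end in
    if k == jsel i then coef_princ lam i c
    else coef_val lam i (jsel i) c - coef_val lam i k c.

Definition phi (lam : C) : C := \det (charmat lam).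
End Matrix.
End Defs.

(* Main.v *)
Require Import Defs.
From HB Require Import structures.
From mathcomp Require Import all_boot all_order all_algebra.
From mathcomp Require Import complex.
From mathcomp Require Import reals.
From mathcomp.analysis Require Import sequences exp trigo.
From mathcomp Require Import ring lra.

Import Order.TTheory GRing.Theory Num.Theory.
Local Open Scope ring_scope.

Module Helpers.
Set Implicit Arguments.
Unset Strict Implicit.
Unset Printing Implicit Defensive.
Import Normc.

Section Gen.
Variables (p : nat) (src dst : 'I_p.-1 -> 'I_p) (jsel : 'I_p -> 'I_p.-1).
Local Notation g := p.-1.

Definition inc (r : 'I_(g + g)) : 'I_g * 'I_p :=
  match split r with inl k => (k, src k) | inr k => (k, dst k) end.

Definition cvg_ (T : nzRingType) (s c o : T) (i : 'I_p) (k : 'I_g) (col : 'I_(g+g)) : T :=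
 match split col with
 | inl k' => if k' == k then (if src k == i then 0 else if dst k == i then s else 0) else 0
 | inr k' => if k' == k then (if src k == i then o else if dst k == i then c else 0) else 0
 end.

Definition prg (T : nzRingType) (c s o : T) (i : 'I_p) (col : 'I_(g+g)) : T :=
 match split col with
 | inl k' => (if dst k' == i then c else 0) - (if src k' == i then o else 0)
 | inr k' => if dst k' == i then - s else 0
 end.

Definition Ngen (T : nzRingType) (c s o : T) : 'M[T]_(g + g) :=
  \matrix_(r, col) let: (k, i) := inc r in
     if k == jsel i then prg c s o i col
     else cvg_ s c o i (jsel i) col - cvg_ s c o i k col.

Lemma Ngen_scale (T : comNzRingType) (q c s o : T) :
  Ngen (q * c) (q * s) (q * o) = q *: Ngen c s o.
Proof.
apply/matrixP => r col; rewrite !mxE; case: (inc r) => k i.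
rewrite /prg /cvg_; case: (split col) => k';
 repeat case: ifP => _; rewrite ?mulr0 ?subr0 ?sub0r ?mulrN ?mulrBr ?mulr0 //.
Qed.

Lemma Ngen_map (T U : comNzRingType) (f : {rmorphism T -> U}) (c s o : T) :
  map_mx f (Ngen c s o) = Ngen (f c) (f s) (f o).
Proof.
apply/matrixP => r col; rewrite !mxE; case: (inc r) => k i.
rewrite /prg /cvg_; case: (split col) => k';
 repeat case: ifP => _; rewrite ?rmorphB ?rmorphN ?raddf0 //.
Qed.
End Gen.

Section Trig.
Variable R : realType.
Local Notation C := R[i].

Lemma csinN (w : C) : csin (- w) = - csin w.
Proof. by rewrite /csin mulrN opprK -opprB mulNr. Qed.
Lemma ccosN (w : C) : ccos (- w) = ccos w.
Proof. by rewrite /ccos mulrN opprK addrC. Qed.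
Lemma cexp0 : cexp (0 : C) = 1.
Proof. by rewrite /cexp /= expR0 cos0 sin0 mul1r mulr0. Qed.
Lemma csin0 : csin (0 : C) = 0.
Proof. by rewrite /csin mulr0 oppr0 cexp0 subrr mul0r. Qed.
Lemma ccos0 : ccos (0 : C) = 1.
Proof. rewrite /ccos mulr0 oppr0 cexp0 -mulr2n -mulr_natr mulfV // mul1r pnatr_eq0 //. Qed.

Lemma sqrtC_sqr (z : C) : sqrtC (z ^+ 2) = z \/ sqrtC (z ^+ 2) = - z.
Proof.
have := eqxx (z ^+ 2); rewrite -{1}(sqrtCK (z ^+ 2)) eqf_sqr.
by case/orP => /eqP ->; [left|right].
Qed.

Variable ell : R.
Lemma s_funE (z : C) : z != 0 -> s_fun (z ^+ 2) ell = csin (z * ell%:C%C) / z.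
Proof.
move=> z0; rewrite /s_fun sqrf_eq0 (negbTE z0).
case: (sqrtC_sqr z) => ->; rewrite // mulNr csinN invrN mulrNN //.
Qed.
Lemma c_funE (z : C) : c_fun (z ^+ 2) ell = ccos (z * ell%:C%C).
Proof. by rewrite /c_fun; case: (sqrtC_sqr z) => ->; rewrite // mulNr ccosN. Qed.
Lemma s'_funE (z : C) : s'_fun (z ^+ 2) ell = ccos (z * ell%:C%C).
Proof. by rewrite /s'_fun; case: (sqrtC_sqr z) => ->; rewrite // mulNr ccosN. Qed.
Lemma s'_fun0 (z : C) : s'_fun (z ^+ 2) 0 = 1.
Proof. by rewrite /s'_fun mulr0 ccos0. Qed.
Lemma c'_funE (z : C) : c'_fun (z ^+ 2) ell = - (z * csin (z * ell%:C%C)).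
Proof. by rewrite /c'_fun; case: (sqrtC_sqr z) => ->; rewrite // !(mulNr, mulrN, csinN, opprK). Qed.
Lemma c'_fun0 (z : C) : c'_fun (z ^+ 2) 0 = 0.
Proof. by rewrite /c'_fun mulr0 csin0 mulr0 oppr0. Qed.
End Trig.

Section Scaled.
Variables (R : realType) (p : nat) (ell : R) (src dst : 'I_p.-1 -> 'I_p)
          (jsel : 'I_p -> 'I_p.-1) (b : 'I_p -> R).
Local Notation C := R[i].
Local Notation g := p.-1.

Definition Bgen (c s : C) : 'M[C]_(g + g) :=
  \matrix_(r, col) let: (k, i) := inc src dst r in
     if k == jsel i then (b i)%:C%C * cvg_ src dst s c 1 i (jsel i) col else 0.

Definition rowfac (z : C) : 'rV[C]_(g + g) :=
  \row_r (let: (k, i) := inc src dst r in if k == jsel i then z^-1 else 1).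
Definition colfac (z : C) : 'rV[C]_(g + g) :=
  \row_col (match split col with inl _ => z | inr _ => 1 end).

Lemma charmat_scaled (z : C) : z != 0 ->
  diag_mx (rowfac z) *m charmat ell src dst jsel b (z ^+ 2) *m diag_mx (colfac z)
  = Ngen src dst jsel (ccos (z * ell%:C%C)) (csin (z * ell%:C%C)) 1
    + z^-1 *: Bgen (ccos (z * ell%:C%C)) (csin (z * ell%:C%C)).
Proof.
move=> z0; rewrite mul_diag_mx mul_mx_diag; apply/matrixP => r col; rewrite !mxE.
rewrite /coef_princ /coef_val /cvg_ /prg /inc.
rewrite (s_funE _ z0) c_funE s'_funE s'_fun0 c'_funE c'_fun0.
case: (split r) => k /=; case: (split col) => k' /=;
  repeat case: ifP => _; rewrite ?mulr0 ?mul0r ?addr0 ?add0r //;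
  by field.
Qed.
End Scaled.

Section Energy.
Variables (R : realType) (p : nat) (src dst : 'I_p.-1 -> 'I_p) (jsel : 'I_p -> 'I_p.-1).
Hypothesis hinc : forall i, src (jsel i) = i \/ dst (jsel i) = i.
Hypothesis hsd : forall k, src k != dst k.
Local Notation C := R[i].
Local Notation g := p.-1.

Lemma split_l (k : 'I_g) : split (lshift g k) = inl k.
Proof. exact: (unsplitK (inl k)). Qed.
Lemma split_r (k : 'I_g) : split (rshift g k) = inr k.
Proof. exact: (unsplitK (inr k)). Qed.

Lemma sum_pick (F : 'I_g -> C) (A : C) (k : 'I_g) :
  \sum_k' (if k' == k then A else 0) * F k' = A * F k.
Proof.
rewrite (bigD1 k) //= eqxx big1 ?addr0 // => k' /negbTE ->; by rewrite mul0r.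
Qed.

Lemma sum_cvg (s c o : C) i k (x : 'I_(g + g) -> C) :
  \sum_col cvg_ src dst s c o i k col * x col =
  (if src k == i then 0 else if dst k == i then s else 0) * x (lshift g k) +
  (if src k == i then o else if dst k == i then c else 0) * x (rshift g k).
Proof.
rewrite big_split_ord /cvg_ /=.
under eq_bigr do rewrite split_l.
under [X in _ + X]eq_bigr do rewrite split_r.
by rewrite !sum_pick.
Qed.

Lemma sum_prg (s c : C) i (x : 'I_(g + g) -> C) :
  \sum_col prg src dst c s 1 i col * x col =
  \sum_k ((if dst k == i then c * x (lshift g k) - s * x (rshift g k) else 0)
          - (if src k == i then x (lshift g k) else 0)).
Proof.
rewrite big_split_ord /prg /= -big_split /=; apply: eq_bigr => k _.
rewrite split_l split_r.
by case: (dst k == i); case: (src k == i); ring.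
Qed.


Definition rowof (i : 'I_p) : 'I_(g + g) :=
  if src (jsel i) == i then lshift g (jsel i) else rshift g (jsel i).

Lemma inc_rowof i : inc src dst (rowof i) = (jsel i, i).
Proof.
rewrite /rowof /inc; case: ifP => [/eqP h|h]; rewrite ?split_l ?split_r ?h //.
by case: (hinc i) => h'; [move: h; rewrite h' eqxx | rewrite h'].
Qed.

Lemma sum_pick_i (y : 'I_p -> C) (d : 'I_p) (A : C) :
  \sum_i y i * (if d == i then A else 0) = y d * A.
Proof.
rewrite (bigD1 d) //= eqxx big1 ?addr0 // => i /negbTE.
by rewrite eq_sym => ->; rewrite mulr0.
Qed.

Lemma Ngen_det_ne0 (c s : C) : 1 < c ->
  c ^+ 2 + s ^+ 2 = 1 -> s != 0 -> \det (Ngen src dst jsel c s 1) != 0.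
Proof.
move=> hc hcs s0; rewrite -det_tr; apply/det0P => -[v v0 hv].
pose x : 'I_(g + g) -> C := fun col => v 0 col.
have hrow : forall r, \sum_col Ngen src dst jsel c s 1 r col * x col = 0.
  move=> r; move/rowP: hv => /(_ r); rewrite !mxE => h; rewrite -[in RHS]h.
  by apply: eq_bigr => j _; rewrite !mxE mulrC.
pose val i k := (if src k == i then 0 else if dst k == i then s else 0) * x (lshift g k) +
  (if src k == i then 1 else if dst k == i then c else 0) * x (rshift g k).
pose U i := val i (jsel i).
have hval : forall r, let: (k, i) := inc src dst r in val i k = U i.
  move=> r; have := hrow r.
  under eq_bigr => col _ do rewrite mxE.
  case: (inc src dst r) => k i.
  have [-> //|hk] := eqVneq k (jsel i).
  under eq_bigr do rewrite mulrBl.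
  rewrite sumrB !sum_cvg => /eqP; rewrite subr_eq0 => /eqP h.
  by rewrite /U /val h.
pose al k := x (lshift g k); pose be k := x (rshift g k).
have hS : forall k, be k = U (src k).
  move=> k; have := hval (lshift g k); rewrite /inc split_l => <-.
  by rewrite /val eqxx mul0r mul1r add0r.
have hD : forall k, s * al k + c * be k = U (dst k).
  move=> k; have := hval (rshift g k); rewrite /inc split_r => <-.
  by rewrite /val (negbTE (hsd k)) eqxx.
have hP : forall i, \sum_k ((if dst k == i then c * al k - s * be k else 0)
          - (if src k == i then al k else 0)) = 0.
  move=> i; have := hrow (rowof i).
  under eq_bigr => col _ do rewrite mxE.
  by rewrite inc_rowof eqxx sum_prg.
have hE : \sum_k ((U (dst k))^* * (c * al k - s * be k) - (U (src k))^* * al k) = 0.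
  have : \sum_i (U i)^* * \sum_k ((if dst k == i then c * al k - s * be k else 0)
          - (if src k == i then al k else 0)) = 0.
    by apply: big1 => i _; rewrite hP mulr0.
  under eq_bigr do rewrite mulr_sumr.
  rewrite exchange_big /= => h; rewrite -[RHS]h; apply: eq_bigr => k _.
  under eq_bigr do rewrite mulrBr.
  by rewrite sumrB !sum_pick_i.
pose W k := (c - 1) * (U (dst k) * (U (dst k))^* + U (src k) * (U (src k))^*)
   + (U (dst k) - U (src k)) * (U (dst k) - U (src k))^*.
have hW : forall k, s * ((U (dst k))^* * (c * al k - s * be k) - (U (src k))^* * al k) = W k.
  move=> k.
  have h1 : s * al k = U (dst k) - c * U (src k) by rewrite -hD -hS; ring.
  have h2 : s ^+ 2 = 1 - c ^+ 2 by rewrite -hcs; ring.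
  transitivity ((U (dst k))^* * (c * (s * al k) - s ^+ 2 * be k) - (U (src k))^* * (s * al k)).
    by ring.
  rewrite h1 h2 hS /W rmorphB /=; ring.
have hc1 : 0 < c - 1 by rewrite subr_gt0.
have hW0 : forall k, 0 <= W k.
  move=> k; apply: addr_ge0; last exact: mul_conjC_ge0.
  by apply: mulr_ge0; [exact: ltW | apply: addr_ge0; exact: mul_conjC_ge0].
have hsum : \sum_k W k = 0.
  under eq_bigr do rewrite -hW.
  by rewrite -mulr_sumr hE mulr0.
have hz : forall k, U (dst k) = 0 /\ U (src k) = 0.
  move=> k; have := psumr_eq0P (fun k _ => hW0 k) hsum (i := k) isT.
  move/eqP; rewrite /W paddr_eq0; last exact: mul_conjC_ge0; last first.
    by apply: mulr_ge0; [exact: ltW | apply: addr_ge0; exact: mul_conjC_ge0].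
  case/andP; rewrite mulf_eq0 (negbTE (lt0r_neq0 hc1)) /= paddr_eq0 ?mul_conjC_ge0 //.
  by rewrite !mul_conjC_eq0 => /andP[/eqP -> /eqP ->].
have hab : forall k, al k = 0 /\ be k = 0.
  move=> k; have [hd hs'] := hz k; split; last by rewrite hS.
  have : s * al k = 0.
    have -> : s * al k = U (dst k) - c * be k by rewrite -hD; ring.
    by rewrite hS hs' hd mulr0 subr0.
  by move/eqP; rewrite mulf_eq0 (negbTE s0) /= => /eqP.
move/negP: v0; apply; apply/eqP/rowP => j; rewrite mxE.
rewrite -(splitK j); case: (split j) => k /=.
  exact: (hab k).1.
exact: (hab k).2.
Qed.

End Energy.

Section Cexp.
Variable R : realType.
Local Notation C := R[i].

Lemma cexpMN (a : C) : cexp a * cexp (- a) = 1.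
Proof.
case: a => x y; rewrite /cexp /= cosN sinN; congr Complex.
  transitivity (expR x * expR (- x) * (cos y ^+ 2 + sin y ^+ 2)); first by ring.
  by rewrite expRxMexpNx_1 cos2Dsin2 mulr1.
by ring.
Qed.

Lemma cexp_neq0 (a : C) : cexp a != 0.
Proof.
apply/negP => /eqP h0; have := cexpMN a; rewrite h0 mul0r => /eqP.
by rewrite eq_sym oner_eq0.
Qed.

Lemma cexpN (a : C) : cexp (- a) = (cexp a)^-1.
Proof. by apply: (mulfI (cexp_neq0 a)); rewrite cexpMN divff ?cexp_neq0. Qed.

Definition Cq (q : C) := (q + q^-1) / 2%:R.
Definition Sq (q : C) := (q - q^-1) / (2%:R * (ci R)).

Lemma ccos_q (w : C) : ccos w = Cq (cexp ((ci R) * w)).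
Proof. by rewrite /ccos /Cq cexpN. Qed.
Lemma csin_q (w : C) : csin w = Sq (cexp ((ci R) * w)).
Proof. by rewrite /csin /Sq cexpN. Qed.

Lemma ci_sqr : (ci R) ^+ 2 = -1 :> C.
Proof. exact: sqr_i. Qed.

Lemma ci_neq0 : (ci R) != 0 :> C.
Proof. by apply/negP => /eqP h; move: ci_sqr; rewrite h expr0n /= => /eqP; rewrite eq_sym oppr_eq0 oner_eq0. Qed.

Lemma CqSq (q : C) : q != 0 -> Cq q ^+ 2 + Sq q ^+ 2 = 1.
Proof.
move=> q0; rewrite /Cq /Sq !expr_div_n exprMn ci_sqr.
by field; rewrite ?pnatr_eq0 //= ?mulf_neq0 ?expf_neq0 ?oppr_eq0 ?oner_eq0 ?pnatr_eq0.
Qed.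
End Cexp.

Section Poly.
Variables (R : realType) (p : nat) (src dst : 'I_p.-1 -> 'I_p) (jsel : 'I_p -> 'I_p.-1).
Hypothesis hinc : forall i, src (jsel i) = i \/ dst (jsel i) = i.
Hypothesis hsd : forall k, src k != dst k.
Local Notation C := R[i].
Local Notation g := p.-1.

Definition cP : {poly C} := ('X ^+ 2 + 1) * (2%:R^-1)%:P.
Definition sP : {poly C} := ('X ^+ 2 - 1) * ((2%:R * ci R)^-1)%:P.
Definition RP : {poly C} := \det (Ngen src dst jsel cP sP 'X).

Lemma cP_eval (q : C) : q != 0 -> cP.[q] = q * Cq q.
Proof. by move=> q0; rewrite /cP /Cq !hornerE /=; field. Qed.
Lemma sP_eval (q : C) : q != 0 -> sP.[q] = q * Sq q.
Proof.
move=> q0; rewrite /sP /Sq !hornerE /=; field.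
by rewrite ci_neq0 q0.
Qed.
Lemma X_eval (q : C) : ('X : {poly C}).[q] = q * 1.
Proof. by rewrite hornerX mulr1. Qed.

Lemma RP_eval (q : C) : q != 0 ->
  RP.[q] = q ^+ (g + g) * \det (Ngen src dst jsel (Cq q) (Sq q) 1).
Proof.
move=> q0; rewrite /RP -horner_evalE -det_map_mx Ngen_map /= !horner_evalE.
by rewrite (cP_eval q0) (sP_eval q0) X_eval Ngen_scale detZ.
Qed.

Lemma RP_neq0 : RP != 0.
Proof.
have q0 : (2%:R^-1 : C) != 0 by rewrite invr_eq0 pnatr_eq0.
apply/negP => /eqP h; have := RP_eval q0; rewrite h horner0 => /esym /eqP.
rewrite mulf_eq0 expf_eq0 (negbTE q0) andbF /=; apply/negP.
apply: Ngen_det_ne0 => //.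
- rewrite -subr_gt0.
  have -> : Cq (2%:R^-1) - 1 = 4%:R^-1 :> C by rewrite /Cq invrK; field.
  by rewrite invr_gt0 ltr0n.
- exact: CqSq.
- rewrite /Sq invrK mulf_neq0 // ?invr_eq0 ?mulf_neq0 ?ci_neq0 ?pnatr_eq0 //.
  have -> : (2%:R^-1 - 2%:R : C) = - (3%:R / 2%:R) by field.
  by rewrite oppr_eq0 mulf_neq0 ?invr_eq0 ?pnatr_eq0.
Qed.


Variable eta : R.
Definition qf (u : R) : C := cexp (ci R * Complex u eta).

Lemma re_qf u : re_part (qf u) = expR (- eta) * cos u.
Proof. by rewrite /qf /cexp /= !mul0r !mul1r sub0r add0r. Qed.

Lemma exists_phase : exists u : R,
  \det (Ngen src dst jsel (ccos (Complex u eta)) (csin (Complex u eta)) 1) != 0.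
Proof.
pose n := size RP.
pose rs := [seq qf (pi * j%:R / n%:R) | j <- iota 0 n].
have huniq : uniq rs.
  rewrite map_inj_in_uniq ?iota_uniq // => j k; rewrite !mem_iota !add0n => hj hk.
  move=> /(congr1 (@re_part R)); rewrite !re_qf => /(mulfI (lt0r_neq0 (expR_gt0 _))).
  have n0 : (0 < n)%N by apply: leq_ltn_trans hj.
  have hin : forall m : nat, (m < n)%N -> (pi : R) * m%:R / n%:R \in `[0, pi].
    move=> m hm; rewrite in_itv /=; apply/andP; split.
      by rewrite divr_ge0 ?mulr_ge0 ?pi_ge0 ?ler0n.
    rewrite ler_pdivrMr ?ltr0n // ler_pM2l ?pi_gt0 // ler_nat; exact: ltnW.
  move/(cos_inj (hin _ hj) (hin _ hk)) => /(mulIf _) h.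
  have /h : n%:R^-1 != 0 :> R by rewrite invr_eq0 pnatr_eq0 -lt0n.
  by move/(mulfI (lt0r_neq0 (@pi_gt0 R)))/eqP; rewrite eqr_nat => /eqP.
have : ~~ all (root RP) rs.
  apply/negP => hall; have := max_poly_roots RP_neq0 hall huniq.
  by rewrite size_map size_iota ltnn.
case/allPn => q /mapP [j _ ->] hq; exists (pi * j%:R / n%:R).
rewrite ccos_q csin_q; move: hq; rewrite /root.
by rewrite RP_eval ?cexp_neq0 // mulf_eq0 negb_or => /andP[_].
Qed.
End Poly.

Section NormcU.
Variable R : realType.
Local Notation C := R[i].

Lemma normc_ge0 (z : C) : 0 <= normc z.
Proof. by case: z => a b; rewrite /normc sqrtr_ge0. Qed.

Lemma normcX (z : C) n : normc (z ^+ n) = normc z ^+ n.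
Proof. by elim: n => [|n IH]; rewrite ?expr0 ?normc1 // !exprS normcM IH. Qed.

Lemma normc_sum n (F : 'I_n -> C) : normc (\sum_(i < n) F i) <= \sum_(i < n) normc (F i).
Proof.
elim: n F => [|n IH] F; first by rewrite !big_ord0 normc0.
rewrite !big_ord_recr /=; apply: le_trans (le_normcD _ _) _.
by rewrite lerD2r IH.
Qed.

Lemma normcB (x y : C) : normc x - normc y <= normc (x - y).
Proof.
have := le_normcD (x - y) y; rewrite subrK; lra.
Qed.

Lemma normc_re (x y : R) : x <= normc (Complex x y).
Proof.
rewrite /normc; apply: le_trans (ler_norm x) _.
by rewrite -sqrtr_sqr ler_sqrt ?addr_ge0 ?sqr_ge0 // lerDl sqr_ge0.
Qed.

Definition Kp (P : {poly C}) : R := \sum_(i < size P) normc P`_i.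

Lemma horner_diff (P : {poly C}) (t : C) : normc t <= 1 ->
  normc (P.[t] - P.[0]) <= normc t * Kp P.
Proof.
move=> t1; rewrite horner_coef0 horner_coef /Kp.
case hs: (size P) => [|n].
  by rewrite !big_ord0 nth_default ?hs // subrr normc0 mulr0.
rewrite !big_ord_recl /= expr0 mulr1 addrC addKr mulrDr.
apply: le_trans (normc_sum _) _.
apply: le_trans (_ : \sum_(i < n) normc t * normc P`_(bump 0 i) <= _).
  apply: ler_sum => i _; rewrite normcM normcX mulrC ler_wpM2r ?normc_ge0 //.
  rewrite exprS -[leRHS]mulr1 ler_wpM2l ?normc_ge0 // exprn_ile1 ?normc_ge0 //.
by rewrite -mulr_sumr lerDr mulr_ge0 ?normc_ge0.
Qed.

Lemma poly_near0 (P : {poly C}) : P.[0] != 0 ->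
  exists2 d : R, 0 < d & forall t : C, normc t <= d -> normc P.[0] / 2 <= normc P.[t].
Proof.
move=> P0.
have A0 : 0 < normc P.[0].
  rewrite lt_def normc_ge0 andbT; apply/negP => /eqP /eq0_normc h; by rewrite h eqxx in P0.
have K0 : 0 <= Kp P by rewrite /Kp sumr_ge0 // => i _; exact: normc_ge0.
move: A0 K0; set A := normc P.[0]; set K := Kp P => A0 K0.
exists (A / (2 * (K + A))); first by rewrite divr_gt0 // mulr_gt0 // ltr_pwDr.
move=> t ht.
have hKA : 0 < K + A by rewrite ltr_pwDr.
have d1 : A / (2 * (K + A)) <= 1.
  rewrite ler_pdivrMr ?mulr_gt0 // mul1r; lra.
have hd := horner_diff P (le_trans ht d1).
have := normcB P.[0] (P.[0] - P.[t]); rewrite subKr.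
have -> : normc (P.[0] - P.[t]) = normc (P.[t] - P.[0]) by rewrite -normcN opprB.
have : normc t * K <= A / (2 * (K + A)) * K by rewrite ler_wpM2r.
have : A / (2 * (K + A)) * K <= A / 2.
  rewrite mulrAC ler_pdivrMr ?mulr_gt0 // mulrAC ler_pdivlMr //.
  rewrite -mulrA ler_pM2l //; nra.
move=> h1 h2 h3; move: hd; rewrite -/K -/A => hd.
move: h1 h2; set d := A / (2 * (K + A)) * K => h1 h2.
move: h3; rewrite -/A => h3; lra.
Qed.
End NormcU.

Section Main.
Variables (R : realType) (p : nat) (ell : R) (src dst : 'I_p.-1 -> 'I_p)
          (jsel : 'I_p -> 'I_p.-1) (b : 'I_p -> R).
Hypothesis hinc : forall i, src (jsel i) = i \/ dst (jsel i) = i.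
Local Notation C := R[i].
Local Notation g := p.-1.

Definition pr (r : 'I_(g + g)) : bool := let: (k, i) := inc src dst r in k == jsel i.

Lemma count_pr : (p <= #|[pred r | pr r]|)%N.
Proof.
have inj : injective (rowof src jsel).
  move=> i j h; have := congr1 (fun r => (inc src dst r).2) h.
  by rewrite !(inc_rowof hinc).
rewrite -{1}(card_ord p) -(card_imset _ inj); apply: subset_leq_card.
by apply/subsetP => r /imsetP [i _ ->]; rewrite inE /pr (inc_rowof hinc) eqxx.
Qed.

Lemma det_charmat (z : C) : z != 0 ->
  z^-1 ^+ #|[pred r | pr r]| * \det (charmat ell src dst jsel b (z ^+ 2)) * z ^+ g
  = \det (Ngen src dst jsel (ccos (z * ell%:C%C)) (csin (z * ell%:C%C)) 1
          + z^-1 *: Bgen src dst jsel b (ccos (z * ell%:C%C)) (csin (z * ell%:C%C))).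
Proof.
move=> z0; rewrite -charmat_scaled // !det_mulmx !det_diag.
congr (_ * _ * _).
  rewrite (eq_bigr (fun r => if pr r then z^-1 else 1)); last first.
    by move=> r _; rewrite mxE /pr; case: (inc src dst r).
  by rewrite -big_mkcond /= prodr_const.
rewrite big_split_ord /=.
under eq_bigr do rewrite mxE split_l.
under [X in _ * X]eq_bigr do rewrite mxE split_r.
by rewrite prodr_const card_ord big1 ?mulr1.
Qed.
End Main.

Section Per.
Variable R : realType.
Local Notation C := R[i].
Lemma cexp_per (ell u0 h1 : R) n : ell != 0 ->
  cexp (ci R * (Complex ((u0 + pi *+ 2 *+ n) / ell) h1 * ell%:C%C))
  = cexp (ci R * Complex u0 (h1 * ell)).
Proof.
move=> l0; rewrite /cexp /= !(mul0r, mulr0, mul1r, add0r, sub0r, subr0, addr0) divfK //.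
by rewrite (periodicn (@cosD2pi R)) (periodicn (@sinD2pi R)).
Qed.
End Per.

Lemma DP_eval (R : realType) (n : nat) (N B : 'M[R[i]]_n) (t : R[i]) :
  (\det (map_mx polyC N + 'X *: map_mx polyC B)).[t] = \det (N + t *: B).
Proof.
rewrite -horner_evalE -det_map_mx; congr (\det _).
apply/matrixP => i j; rewrite !mxE /= horner_evalE.
by rewrite hornerD hornerC mulrC hornerMX hornerC mulrC.
Qed.


End Helpers.
Import Helpers.
Import Normc.

Theorem lemma4p5 (R : realType) (p : nat) (ell : R)
    (src dst : 'I_p.-1 -> 'I_p) (jsel : 'I_p -> 'I_p.-1) (b : 'I_p -> R) :
  (2 <= p)%N -> 0 < ell -> is_tree src dst ->
  (forall i, src (jsel i) = i \/ dst (jsel i) = i) ->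
  forall r : nat, (1 <= r <= p)%N ->
    ~ sine_type (fun z : R[i] => z ^+ r.-1 * phi ell src dst jsel b (z ^+ 2)).
Proof.
move=> hp hell [hsd _] hinc r /andP[r1 rp] [_ [_ [_ [[h1 [M1 [M2 [hM1 [hM2 hM]]]]] _]]]].
have [u0 hu0] := exists_phase hinc hsd (h1 * ell).
set C0 := ccos (Complex u0 (h1 * ell)) in hu0.
set S0 := csin (Complex u0 (h1 * ell)) in hu0.
pose N0 := Ngen src dst jsel C0 S0 1.
pose B0 := Bgen src dst jsel b C0 S0.
pose DP : {poly R[i]} := \det (map_mx polyC N0 + 'X *: map_mx polyC B0).
have DPe : forall t, DP.[t] = \det (N0 + t *: B0) by move=> t; exact: DP_eval.
have DP0 : DP.[0] != 0.
  by rewrite DPe scale0r addr0; exact: hu0.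
have [d d0 hd] := poly_near0 DP0.
set A := normc DP.[0] in hd.
have A0 : 0 < A.
  rewrite lt_def normc_ge0 andbT; apply/negP => /eqP /eq0_normc h; by rewrite h eqxx in DP0.
pose B := 1 + d^-1 + 2 * (`|M2| + 1) / A.
have B0p : 0 <= 2 * (`|M2| + 1) / A by rewrite divr_ge0 ?mulr_ge0 ?addr_ge0 ?normr_ge0 ?ltW.
have d0' : 0 < d^-1 by rewrite invr_gt0.
pose n := Num.Def.archi_bound (`|B * ell - u0|).
pose x := (u0 + pi *+ 2 *+ n) / ell.
pose z : R[i] := Complex x h1.
have hn : B * ell - u0 < n%:R.
  apply: le_lt_trans (ler_norm _) _; exact: archi_boundP.
have hpi : n%:R <= pi *+ 2 *+ n :> R.
  rewrite -mulr_natr mulr2n; have := @pi_ge2 R; have : 0 <= n%:R :> R by [].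
  move=> h0 h2; nra.
have hB : B <= x by rewrite /x ler_pdivlMr //; lra.
have B1 : 1 + d^-1 <= B by rewrite /B; lra.
have B2 : 2 * (`|M2| + 1) / A <= B by rewrite /B; lra.
have hm := normc_re x h1; rewrite -/z in hm.
set m := normc z in hm.
have m1 : 1 <= m by lra.
have md : d^-1 <= m by lra.
have mM : 2 * (`|M2| + 1) / A <= m by lra.
have m0 : 0 < m by lra.
have z0 : z != 0 by apply/negP => /eqP h; move: m0; rewrite /m h normc0 ltxx.
have hmd : normc z^-1 <= d.
  by rewrite normcV -/m -[d]invrK lef_pV2 ?posrE ?invr_gt0 //; lra.
have hc : ccos (z * ell%:C%C) = C0 by rewrite /C0 !ccos_q cexp_per // lt0r_neq0.
have hs : csin (z * ell%:C%C) = S0 by rewrite /S0 !csin_q cexp_per // lt0r_neq0.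
have hdet := det_charmat ell src dst jsel b z0.
rewrite hc hs -/N0 -/B0 -DPe in hdet.
have hY := hd _ hmd; rewrite -hdet !normcM !normcX normcV -/m in hY.
set nd := normc (\det (charmat ell src dst jsel b (z ^+ 2))) in hY.
set P := #|[pred r | pr src dst jsel r]| in hY.
have nd0 : 0 <= nd by apply: normc_ge0.
have hP : (p.-1.+1 <= P)%N.
  have := count_pr hinc; rewrite -/P; by rewrite prednK // ltnW.
have mg : 0 < m ^+ p.-1 by apply: exprn_gt0.
have mP : 0 < m ^+ P by apply: exprn_gt0.
have E1 : A / 2 * m ^+ P <= nd * m ^+ p.-1.
  have := ler_wpM2r (ltW mP) hY.
  have -> : m^-1 ^+ P * nd * m ^+ p.-1 * m ^+ P = nd * m ^+ p.-1.
    rewrite exprVn; field; by rewrite expf_neq0 // lt0r_neq0.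
  done.
have E2 : m ^+ p.-1 * m <= m ^+ P by rewrite -exprSr ler_weXn2l.
have E3 : A / 2 * m <= nd.
  have : A / 2 * m * m ^+ p.-1 <= nd * m ^+ p.-1.
    apply: le_trans E1; rewrite -mulrA [m * _]mulrC ler_wpM2l //.
    by rewrite divr_ge0 ?ltW.
  by rewrite ler_pM2r.
have := hM x; rewrite -/z /phi normcM normcX -/m -/nd => /andP[_ hle].
have E4 : nd <= m ^+ r.-1 * nd by rewrite ler_peMl // exprn_ege1.
have E5 : 2 * (`|M2| + 1) <= m * A by rewrite -ler_pdivrMr.
have E6 := ler_norm M2.
nra.
Qed.
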